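(* For every integer $k\ge2$ and every $x\in\mathbb{R}^n$, $$\sqrt[2k-2]{H_{2k-2}(x)}\le\sqrt[2k]{H_{2k}(x)}.$$
   Context: For $m\in\mathbb{N}$, $H_m(x)=h_m(x)/\binom{n+m-1}{m}$ where $h_m(x)=\sum_{\alpha\in\mathbb{N}_0^n,|\alpha|=m}x^\alpha$ is the complete homogeneous symmetric polynomial of degree $m$ in $n$ variables (for even $m$ it is nonnegative on $\mathbb{R}^n$). *)

(* Defs.v *)
From HB Require Import structures.
From mathcomp Require Import all_boot all_order all_algebra.
From mathcomp Require Import all_classical all_reals all_analysis.
Set Implicit Arguments. Unset Strict Implicit. Unset Printing Implicit Defensive.
Import Order.TTheory GRing.Theory Num.Theory.
Local Open Scope ring_scope.

(* complete homogeneous symmetric polynomial h_m evaluated at x in R^n: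
   sum over multi-indices alpha : 'I_n -> nat with |alpha| = m of x^alpha.
   Each alpha_i <= m, so alpha ranges over {ffun 'I_n -> 'I_m.+1}. *)
Definition hsym (R : realType) (n m : nat) (x : 'rV[R]_n) : R :=
  \sum_(a : {ffun 'I_n -> 'I_m.+1} | (\sum_(i < n) (a i : nat))%N == m)
     \prod_(i < n) x ord0 i ^+ (a i : nat).

Definition Hsym (R : realType) (n m : nat) (x : 'rV[R]_n) : R :=
  hsym m x / ('C(n + m - 1, m))%:R.

(* Main.v *)
Require Import Defs.
From HB Require Import structures.
From mathcomp Require Import all_boot all_order all_algebra.
From mathcomp Require Import all_classical all_reals all_analysis.
From mathcomp Require Import zify ring lra.
Import Order.TTheory GRing.Theory Num.Theory.
Local Open Scope ring_scope.

Section WSsec.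
Variable R : realType.
Variable n : nat.
Local Notation word := (seq 'I_n).

Fixpoint WS (m : nat) (F : word -> R) : R :=
  if m is m'.+1 then \sum_(i < n) WS m' (fun s => F (i :: s)) else F [::].

Lemma WS_ext m F G : (forall s, size s = m -> F s = G s) -> WS m F = WS m G.
Proof.
elim: m F G => [|m IH] F G H /=; first exact: H.
apply: eq_bigr => i _; apply: IH => s Hs; apply: H; by rewrite /= Hs.
Qed.

Lemma WS_add m F G : WS m (fun s => F s + G s) = WS m F + WS m G.
Proof.
elim: m F G => [|m IH] F G //=.
rewrite -big_split /=; apply: eq_bigr => i _; exact: IH.
Qed.

Lemma WS_scale m c F : WS m (fun s => c * F s) = c * WS m F.
Proof.
elim: m F => [|m IH] F //=; rewrite mulr_sumr; apply: eq_bigr => i _; exact: IH.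
Qed.

Lemma WS_sum m (I : finType) (F : I -> word -> R) :
  WS m (fun s => \sum_k F k s) = \sum_k WS m (F k).
Proof.
elim: m F => [|m IH] F //=.
rewrite exchange_big /=; apply: eq_bigr => i _.
exact: (IH (fun k s => F k (i :: s))).
Qed.

Lemma WS_cat a b F : WS (a + b) F = WS a (fun s => WS b (fun t => F (s ++ t))).
Proof.
elim: a F => [|a IH] F //=.
apply: eq_bigr => i _; exact: (IH (fun s => F (i :: s))).
Qed.

Lemma WS_swap a b (F : word -> word -> R) :
  WS a (fun s => WS b (fun t => F s t)) = WS b (fun t => WS a (fun s => F s t)).
Proof.
elim: a F => [|a IH] F //=.
rewrite WS_sum; apply: eq_bigr => i _; exact: (IH (fun s t => F (i :: s) t)).
Qed.

Definition phi (s : word) : nat := \prod_(i < n) (count_mem i s)`!.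

Lemma phi_perm s t : perm_eq s t -> phi s = phi t.
Proof. by move/permP => H; rewrite /phi; apply: eq_bigr => i _; rewrite H. Qed.

Lemma phi_cons i s : phi (i :: s) = ((count_mem i s).+1 * phi s)%N.
Proof.
rewrite /phi (bigD1 i) //= (bigD1 i (P := predT)) //= eqxx add1n factS mulnA.
congr (_ * _); apply: eq_bigr => j /negbTE ji; by rewrite eq_sym ji.
Qed.

Lemma sum_count s : (\sum_(i < n) count_mem i s)%N = size s.
Proof.
elim: s => [|a s IH] /=; first by rewrite big1.
rewrite big_split /= IH (bigD1 a) //= eqxx big1 ?add1n // => j /negbTE; by rewrite eq_sym => ->.
Qed.

Fixpoint rise (c b : nat) : nat := if b is b'.+1 then (c * rise c.+1 b')%N else 1%N.

Lemma WS_phi b s : WS b (fun r => (phi (r ++ s))%:R) = ((rise (size s + n) b * phi s)%N)%:R.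
Proof.
elim: b s => [|b IH] s /=; first by rewrite mul1n.
transitivity (\sum_(i < n) (((rise (size s + n).+1 b * phi (i :: s))%N)%:R : R)).
  apply: eq_bigr => i _; rewrite -addSn -IH; apply: WS_ext => r _.
  have hp : perm_eq ([:: i] ++ r ++ s) (r ++ [:: i] ++ s) by rewrite perm_catCA.
  by rewrite (phi_perm _ _ hp).
rewrite -natr_sum; congr (_%:R).
under eq_bigr do rewrite phi_cons.
have hs : (\sum_(i < n) ((count_mem i s).+1 * phi s) = (size s + n) * phi s)%N.
  rewrite -big_distrl /=; congr (_ * _)%N.
  under eq_bigr do rewrite -addn1.
  by rewrite big_split /= sum_count sum1_card card_ord.
by rewrite -big_distrr /= hs mulnA [(rise _ _ * _)%N]mulnC.
Qed.


Definition X (x : 'I_n -> R) (s : word) : R := \prod_(j <- s) x j.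

Lemma X_cat x s t : X x (s ++ t) = X x s * X x t.
Proof. by rewrite /X big_cat. Qed.

Lemma X_count x s : X x s = \prod_(i < n) x i ^+ count_mem i s.
Proof.
elim: s => [|a s IH]; first by rewrite /X big_nil big1.
rewrite /X big_cons -/(X x s) IH.
under [RHS]eq_bigr do rewrite /= exprD.
rewrite big_split /=; congr (_ * _).
rewrite (bigD1 a) //= eqxx expr1 big1 ?mulr1 // => j /negbTE; by rewrite eq_sym => ->.
Qed.

Definition cnt (s : word) : {ffun 'I_n -> nat} := [ffun i => count_mem i s].

Lemma count_lemma m (al : {ffun 'I_n -> nat}) :
  WS m (fun s => (((cnt s == al) * phi s)%N)%:R) =
  (((m`! * ((\sum_i al i) == m))%N)%:R : R).
Proof.
elim: m al => [|m IH] al /=.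
  have -> : (cnt [::] == al) = (\sum_i al i == 0)%N.
    rewrite sum_nat_eq0; apply/eqP/forallP => [<- i|H]; first by rewrite ffunE.
    apply/ffunP => i; rewrite ffunE /=; by move: (H i) => /eqP ->.
  have -> : phi [::] = 1%N by rewrite /phi big1.
  by rewrite muln1 mul1n.
pose ali (i : 'I_n) := [ffun j => al j - (i == j)]%N.
have key i s : (((cnt (i :: s) == al) * phi (i :: s)) = al i * ((cnt s == ali i) * phi s))%N.
  have kb : (cnt (i :: s) == al) = (0 < al i)%N && (cnt s == ali i).
    apply/eqP/andP => [E|[H /eqP E]].
      rewrite -E; split; first by rewrite ffunE /= eqxx.
      by apply/eqP/ffunP => j; rewrite /ali !ffunE -E ffunE /= addKn.
    apply/ffunP => j; rewrite ffunE /=.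
    move/ffunP: E => /(_ j); rewrite /ali !ffunE => ->.
    case: eqP => [<-|_]; last by rewrite add0n subn0.
    by rewrite add1n subn1 prednK.
  rewrite kb; case: (posnP (al i)) => [->|H] //=.
  case: eqP => [E|_]; last by rewrite !mul0n muln0.
  rewrite phi_cons !mul1n; congr (_ * _)%N.
  by move/ffunP: E => /(_ i); rewrite !ffunE eqxx => ->; rewrite subn1 prednK.
transitivity (\sum_(i < n) (((al i * (m`! * ((\sum_j al j) == m.+1)))%N)%:R : R)).
  apply: eq_bigr => i _.
  rewrite (@WS_ext m _ (fun s => (al i)%:R * (((cnt s == ali i) * phi s)%N)%:R)); last first.
    by move=> s _; rewrite key natrM.
  rewrite WS_scale IH -natrM; congr (_%:R).
  case: (posnP (al i)) => [->|H] //.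
  congr (_ * (_ * _))%N.
  rewrite (bigD1 i) //= [in RHS](bigD1 i) //= ffunE eqxx.
  have -> : (\sum_(j < n | j != i) ali i j = \sum_(j < n | j != i) al j)%N.
    by apply: eq_bigr => j /negbTE; rewrite ffunE eq_sym => ->; rewrite subn0.
  have -> : (al i - true = al i - 1)%N by [].
  set S := (\sum_(j < n | j != i) al j)%N.
  case: eqP => E1; case: eqP => E2 => //; exfalso; lia.
rewrite -natr_sum; congr (_%:R).
rewrite -big_distrl /=; case: eqP => [->|_]; last by rewrite !muln0.
by rewrite factS mulnA.
Qed.



Definition M x m := WS m (fun s => X x s * (phi s)%:R).

Lemma M_hsym (xr : 'rV[R]_n) m : M (fun i => xr ord0 i) m = (m`!)%:R * hsym m xr.
Proof.
rewrite /M.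
rewrite (@WS_ext m _ (fun s => \sum_(a : {ffun 'I_n -> 'I_m.+1})
   (\prod_(i < n) xr ord0 i ^+ (a i : nat)) *
   (((cnt s == [ffun i => (a i : nat)]) * phi s)%N)%:R)); last first.
  move=> s hs.
  pose a0 : {ffun 'I_n -> 'I_m.+1} := [ffun i => inord (count_mem i s)].
  have ha0 i : (a0 i : nat) = count_mem i s.
    by rewrite ffunE inordK // ltnS -hs count_size.
  rewrite (bigD1 a0) //= [X in _ + X]big1 ?addr0; last first.
    move=> a /negbTE ne; case: eqP => [E|_]; last by rewrite mul0n mulr0.
    exfalso; move/negP: ne; apply; apply/eqP/ffunP => i; apply: val_inj => /=.
    move/ffunP: E => /(_ i); rewrite !ffunE => <-.
    by rewrite inordK // ltnS -hs count_size.
  have -> : cnt s == [ffun i => (a0 i : nat)].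
    by apply/eqP/ffunP => i; rewrite !ffunE inordK // ltnS -hs count_size.
  rewrite mul1n X_count; congr (_ * _).
  by apply: eq_bigr => i _; rewrite ha0.
rewrite WS_sum.
under eq_bigr do rewrite WS_scale count_lemma.
rewrite /hsym mulr_sumr [RHS]big_mkcond /=; apply: eq_bigr => a _.
have -> : (\sum_i [ffun i => (a i : nat)] i = \sum_(i < n) (a i : nat))%N.
  by apply: eq_bigr => i _; rewrite ffunE.
case: eqP => _; last by rewrite muln0 mulr0.
by rewrite muln1 mulrC.
Qed.

Lemma rise_fact c m : (rise c.+1 m * c`! = (c + m)`!)%N.
Proof.
elim: m c => [|m IH] c /=; first by rewrite mul1n addn0.
by rewrite addnS -addSn -IH factS mulnCA mulnA.
Qed.

Lemma rise_gt0 c m : (0 < c)%N -> (0 < rise c m)%N.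
Proof.
elim: m c => [|m IH] c hc //=; rewrite muln_gt0 hc; exact: IH.
Qed.

Lemma rise_add c a b : rise c (a + b) = (rise c a * rise (c + a) b)%N.
Proof.
elim: a c => [|a IH] c /=; first by rewrite mul1n addn0.
by rewrite IH mulnA addSnnS.
Qed.

Lemma M_H (xr : 'rV[R]_n) m : (0 < n)%N ->
  M (fun i => xr ord0 i) m = (rise n m)%:R * Hsym m xr.
Proof.
move=> n0; rewrite M_hsym /Hsym.
have hr := rise_fact n.-1 m; rewrite prednK // in hr.
have nm : (n + m - 1 = n.-1 + m)%N by lia.
have hb := bin_fact (leq_addl n.-1 m); rewrite addnK in hb.
have hC : ('C(n.-1 + m, m) > 0)%N by rewrite bin_gt0 leq_addl.
have hrC : rise n m = ('C(n.-1 + m, m) * m`!)%N.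
  apply/eqP; rewrite -(eqn_pmul2r (fact_gt0 n.-1)) hr -hb mulnA; done.
rewrite nm hrC natrM.
have hC' : ('C(n.-1 + m, m)%:R : R) != 0 by rewrite pnatr_eq0 -lt0n.
by field.
Qed.

Definition B D (F G : word -> R) :=
  WS D (fun u => WS D (fun v => F u * G v * (phi (u ++ v))%:R)).



Lemma vand a b K : (b < K)%N ->
  (a + b)`! = (\sum_(k < K) (a`! * 'C(a, k)) * (b`! * 'C(b, k)))%N.
Proof.
move=> hK.
have hb := bin_fact (leq_addl a b); rewrite addnK in hb.
have hV := binomial.Vandermonde a b b.
rewrite -hb -hV.
have -> : (\sum_(k < K) a`! * 'C(a, k) * (b`! * 'C(b, k)) =
          (a`! * b`!) * \sum_(k < K) 'C(a, k) * 'C(b, k))%N.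
  rewrite big_distrr /=; apply: eq_bigr => k _; ring.
rewrite (big_ord_widen K (fun k => 'C(a, k) * 'C(b, b - k))%N hK) big_mkcond /=.
rewrite (eq_bigr (fun k : 'I_K => 'C(a, k) * 'C(b, k))%N); last first.
  move=> k _; case: ltnP => hk; first by rewrite bin_sub // -ltnS.
  by rewrite (bin_small hk) muln0.
by rewrite [LHS]mulnC [(b`! * a`!)%N]mulnC.
Qed.

Definition V (D : nat) (k : {ffun 'I_n -> 'I_D.+1}) (u : word) : nat :=
  \prod_(i < n) ((count_mem i u)`! * 'C(count_mem i u, k i)).
Arguments V {D}.

Lemma phi_sos D u v : (size v <= D)%N ->
  phi (u ++ v) = (\sum_(k : {ffun 'I_n -> 'I_D.+1}) V k u * V k v)%N.
Proof.
move=> hv; rewrite /phi.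
rewrite (eq_bigr (fun i => \sum_(k < D.+1) ((count_mem i u)`! * 'C(count_mem i u, k)) *
   ((count_mem i v)`! * 'C(count_mem i v, k)))%N); last first.
  move=> i _; rewrite count_cat; apply: vand.
  by rewrite ltnS (leq_trans (count_size _ _) hv).
rewrite bigA_distr_bigA /=; apply: eq_bigr => k _.
by rewrite /V -big_split.
Qed.

Definition T D (k : {ffun 'I_n -> 'I_D.+1}) (F : word -> R) :=
  WS D (fun u => F u * (V k u)%:R).
Arguments T {D}.

Lemma B_sos D F G : B D F G = \sum_(k : {ffun 'I_n -> 'I_D.+1}) T k F * T k G.
Proof.
rewrite /B (@WS_ext D _ (fun u => \sum_(k : {ffun 'I_n -> 'I_D.+1})
   (F u * (V k u)%:R) * T k G)); last first.
  move=> u _; rewrite /T.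
  rewrite (@WS_ext D _ (fun v => \sum_(k : {ffun 'I_n -> 'I_D.+1})
     (F u * (V k u)%:R) * (G v * (V k v)%:R))); last first.
    move=> v hv; rewrite (@phi_sos D u v); last by rewrite hv.
    rewrite natr_sum mulr_sumr.
    by apply: eq_bigr => k _; rewrite natrM mulrACA.
  by rewrite WS_sum; apply: eq_bigr => k _; rewrite WS_scale.
rewrite WS_sum; apply: eq_bigr => k _.
rewrite (@WS_ext D _ (fun u => T k G * (F u * (V k u)%:R))) ?WS_scale 1?mulrC //.
by move=> u _; rewrite mulrC.
Qed.

Lemma B_ge0 D F : 0 <= B D F F.
Proof. by rewrite B_sos; apply: sumr_ge0 => k _; rewrite -expr2 sqr_ge0. Qed.

Lemma disc (A C E : R) : 0 <= A ->
  (forall l, 0 <= A * l ^+ 2 + 2 * C * l + E) -> C ^+ 2 <= A * E.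
Proof.
move=> hA H.
case: (eqVneq A 0) => [A0|An0].
  case: (eqVneq C 0) => [->|Cn0]; first by rewrite A0 expr0n /= mul0r.
  have := H (- (E + 1) / (2 * C)); rewrite A0 mul0r add0r.
  have -> : 2 * C * (- (E + 1) / (2 * C)) = - (E + 1) by field.
  lra.
have hA' : 0 < A by rewrite lt0r An0.
have := H (- C / A).
have hl : A * (- C / A) = - C by field.
set l := - C / A => h.
have h2 : 0 <= A * (A * l ^+ 2 + 2 * C * l + E) by apply: mulr_ge0; [apply: ltW|].
have e : A * (A * l ^+ 2 + 2 * C * l + E) = (A * l) ^+ 2 + 2 * C * (A * l) + A * E by ring.
rewrite e hl in h2.
have e2 : (- C) ^+ 2 + 2 * C * (- C) + A * E = A * E - C ^+ 2 by ring.
rewrite e2 in h2; lra.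
Qed.

Lemma B_CS D F G : B D F G ^+ 2 <= B D F F * B D G G.
Proof.
rewrite !B_sos; apply: disc; first by apply: sumr_ge0 => k _; rewrite -expr2 sqr_ge0.
move=> l.
pose K := {ffun 'I_n -> 'I_D.+1}.
have -> : (\sum_(k : K) T k F * T k F) * l ^+ 2 + 2 * (\sum_(k : K) T k F * T k G) * l + \sum_(k : K) T k G * T k G
   = \sum_(k : K) (l * T k F + T k G) ^+ 2.
  rewrite mulr_suml mulr_sumr mulr_suml -!big_split /=; apply: eq_bigr => k _; ring.
by apply: sumr_ge0 => k _; rewrite sqr_ge0.
Qed.



Lemma Bgg x D : B D (X x) (X x) = M x (D + D).
Proof. rewrite /M WS_cat; apply: WS_ext => u _; apply: WS_ext => v _; by rewrite X_cat. Qed.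

Lemma Bfg x i : B i.+2 (fun u => X x (drop 2 u)) (X x) =
  (rise (i + i.+2 + n) 2)%:R * M x (i + i.+2).
Proof.
rewrite /B.
have e : i.+2 = (2 + i)%N by rewrite add2n.
rewrite {1}e WS_cat.
transitivity (WS 2 (fun p => WS (i + i.+2) (fun w => X x w * (phi (p ++ w))%:R))).
  apply: WS_ext => p hp; rewrite WS_cat; apply: WS_ext => u _; apply: WS_ext => v _.
  by rewrite drop_size_cat // X_cat catA.
rewrite WS_swap /M -WS_scale; apply: WS_ext => w hw.
rewrite WS_scale WS_phi hw natrM; ring.
Qed.

Lemma Bff x i : B i.+2 (fun u => X x (drop 2 u)) (fun u => X x (drop 2 u)) =
  (rise (i + i + n) 4)%:R * M x (i + i).
Proof.
rewrite /B.
have e : i.+2 = (2 + i)%N by rewrite add2n.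
rewrite {1}e WS_cat.
transitivity (WS 2 (fun p => WS 2 (fun q =>
   WS (i + i) (fun w => X x w * (phi ((p ++ q) ++ w))%:R)))).
  apply: WS_ext => p hp.
  transitivity (WS i (fun u => WS 2 (fun q => WS i (fun v =>
     X x u * X x v * (phi ((p ++ q) ++ (u ++ v)))%:R)))).
    apply: WS_ext => u hu; rewrite e WS_cat; apply: WS_ext => q hq; apply: WS_ext => v hv.
    rewrite !drop_size_cat //.
    have hpp : perm_eq ((p ++ u) ++ (q ++ v)) ((p ++ q) ++ (u ++ v)).
      by rewrite -!catA perm_cat2l perm_catCA.
    by rewrite (phi_perm _ _ hpp).
  rewrite WS_swap; apply: WS_ext => q hq; rewrite WS_cat.
  by apply: WS_ext => u _; apply: WS_ext => v _; rewrite X_cat.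
rewrite -(WS_cat 2 2 (fun r => WS (i + i) (fun w => X x w * (phi (r ++ w))%:R))).
rewrite WS_swap /M -WS_scale; apply: WS_ext => w hw.
rewrite WS_scale WS_phi hw natrM; ring.
Qed.



Lemma logconv (xr : 'rV[R]_n) i : (0 < n)%N ->
  Hsym (i + i.+2) xr ^+ 2 <= Hsym (i + i) xr * Hsym (i.+2 + i.+2) xr.
Proof.
move=> n0; pose x := fun j => xr ord0 j.
have h := B_CS i.+2 (fun u => X x (drop 2 u)) (X x).
rewrite Bfg Bff Bgg !M_H // in h.
set K := rise n (i.+2 + i.+2) in h.
have k1 : (rise (i + i.+2 + n) 2 * rise n (i + i.+2))%N = K.
  rewrite /K (_ : (i.+2 + i.+2 = (i + i.+2) + 2)%N); last by lia.
  by rewrite [RHS]rise_add [(n + _)%N]addnC mulnC.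
have k2 : (rise (i + i + n) 4 * rise n (i + i))%N = K.
  rewrite /K (_ : (i.+2 + i.+2 = (i + i) + 4)%N); last by lia.
  by rewrite [RHS]rise_add [(n + _)%N]addnC mulnC.
have e1 : (rise (i + i.+2 + n) 2)%:R * ((rise n (i + i.+2))%:R * Hsym (i + i.+2) xr)
   = K%:R * Hsym (i + i.+2) xr :> R by rewrite mulrA -natrM k1.
have e2 : (rise (i + i + n) 4)%:R * ((rise n (i + i))%:R * Hsym (i + i) xr)
   = K%:R * Hsym (i + i) xr :> R by rewrite mulrA -natrM k2.
rewrite e1 e2 in h.
have hK : 0 < (K%:R : R) by rewrite ltr0n rise_gt0.
have e3 : (K%:R * Hsym (i + i) xr) * (K%:R * Hsym (i.+2 + i.+2) xr)
   = K%:R ^+ 2 * (Hsym (i + i) xr * Hsym (i.+2 + i.+2) xr) :> R by ring.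
rewrite e3 exprMn in h.
by rewrite -(ler_pM2l (exprn_gt0 2 hK)).
Qed.

Lemma Hnn (xr : 'rV[R]_n) j : (0 < n)%N -> 0 <= Hsym (j + j) xr.
Proof.
move=> n0; pose x := fun j => xr ord0 j.
have h := B_ge0 j (X x).
rewrite Bgg M_H // in h.
have hK : 0 < ((rise n (j + j))%:R : R) by rewrite ltr0n rise_gt0.
by rewrite (pmulr_rge0 _ hK) in h.
Qed.

Lemma Hzero (xr : 'rV[R]_n) : (0 < n)%N -> Hsym 0 xr = 1.
Proof.
move=> n0; have := M_H xr 0 n0.
rewrite /M /= /X big_nil mul1r.
have -> : phi [::] = 1%N by rewrite /phi big1.
by rewrite mul1r => <-.
Qed.

End WSsec.

Lemma seq_pow (R : realType) (a : nat -> R) : a 0%N = 1 -> (forall j, 0 <= a j) ->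
  (forall j, a j.+1 ^+ 2 <= a j * a j.+2) -> forall k, a k ^+ k.+1 <= a k.+1 ^+ k.
Proof.
move=> a0 ha hc; elim=> [|k IH]; first by rewrite expr1 expr0 a0.
case: (eqVneq (a k.+1) 0) => [->|nz]; first by rewrite expr0n /= exprn_ge0.
have pos : 0 < a k.+1 by rewrite lt0r nz ha.
have h1 : (a k.+1 ^+ 2) ^+ k.+1 <= (a k * a k.+2) ^+ k.+1.
  apply: lerXn2r; rewrite ?nnegrE ?exprn_ge0 ?mulr_ge0 //; exact: hc.
have h2 : a k ^+ k.+1 * a k.+2 ^+ k.+1 <= a k.+1 ^+ k * a k.+2 ^+ k.+1.
  by apply: ler_wpM2r; [exact: exprn_ge0 | exact: IH].

have h3 : a k.+1 ^+ k * a k.+1 ^+ k.+2 <= a k.+1 ^+ k * a k.+2 ^+ k.+1.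
  have -> : a k.+1 ^+ k * a k.+1 ^+ k.+2 = (a k.+1 ^+ 2) ^+ k.+1.
    by rewrite -exprD -exprM; congr (_ ^+ _); lia.
  by apply: le_trans h2; rewrite -exprMn.
by rewrite ler_pM2l ?exprn_gt0 in h3.
Qed.

Theorem mainTheorem10 (R : realType) (n k : nat) (x : 'rV[R]_n) :
  (2 <= k)%N ->
  powR (Hsym (2 * k - 2) x) (((2 * k - 2)%N)%:R)^-1
    <= powR (Hsym (2 * k) x) (((2 * k)%N)%:R)^-1.
Proof.
case: k => [|[|m]] // _.
have -> : (2 * m.+2 - 2 = m.+1 + m.+1)%N by lia.
have -> : (2 * m.+2 = m.+2 + m.+2)%N by lia.
case: (posnP n) => [n0|n0].
  rewrite /Hsym !bin_small; try lia.
  rewrite !invr0 !mulr0 !powR0 // invr_eq0 pnatr_eq0 //.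
pose a j := Hsym (j + j) x.
have ha := @seq_pow R a (@Hzero R n x n0) (fun j => @Hnn R n x j n0).
have hc : forall j, a j.+1 ^+ 2 <= a j * a j.+2.
  by move=> j; rewrite /a addSnnS; exact: logconv.
have hp := ha hc m.+1.
rewrite /a in hp.
set p := Hsym (m.+1 + m.+1) x in hp *.
set q := Hsym (m.+2 + m.+2) x in hp *.
have p0 : 0 <= p by exact: Hnn.
have q0 : 0 <= q by exact: Hnn.
pose e : R := (((m.+1 + m.+1) * m.+2)%N%:R)^-1.
have h1 : ((m.+1 + m.+1)%N%:R : R) != 0 by rewrite pnatr_eq0.
have h2 : ((m.+2 + m.+2)%N%:R : R) != 0 by rewrite pnatr_eq0.
have h3 : ((m.+2)%N%:R : R) != 0 by rewrite pnatr_eq0.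
have h4 : ((m.+1)%N%:R : R) != 0 by rewrite pnatr_eq0.
have ep : ((m.+1 + m.+1)%N%:R : R)^-1 = (m.+2)%:R * e.
  by rewrite /e natrM invfM mulrCA mulfV // mulr1.
have eq : ((m.+2 + m.+2)%N%:R : R)^-1 = (m.+1)%:R * e.
  have en : ((m.+1 + m.+1) * m.+2 = (m.+2 + m.+2) * m.+1)%N.
    by rewrite !addnn -!mul2n mulnAC.
  by rewrite /e en natrM invfM mulrCA mulfV // mulr1.
rewrite ep eq !powRrM !powR_mulrn //.
apply: ge0_ler_powR => //; first by rewrite /e invr_ge0 ler0n.
  by rewrite nnegrE exprn_ge0.
by rewrite nnegrE exprn_ge0.
Qed.
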